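(* Let $T:\mathbb{Z}_{\ge 0}\times\mathbb{Z}_{\ge 0}\to\mathbb{R}$ be the function defined by $T(n,0)=0$ for all $n\ge 0$, $T(0,q)=0$ for all $q\ge 0$, and, for all $n\ge 1$ and $q\ge 1$, $$T(n,q) \;=\; n+\frac{2}{n(q+1)}\sum_{j=0}^{n-1}\sum_{k=0}^{q} T(j,k).$$ Then for all integers $n\ge 0$ and $q\ge 1$, $$T(n,q)\;\le\; 2nH_q \;=\; O(n\log q),$$ where $H_q=\sum_{i=1}^{q} 1/i$ is the $q$-th harmonic number.
   Context: The recurrence models the average number of item comparisons needed to answer $q$ distinct selection queries (queries asking for the item of rank $k$) online on an initially unsorted array of $n$ distinct items, averaged over all input permutations (with the $q$ queries equally likely to split over the pivot in any of the $q+1$ ways), using Hoare's quickselect restricted to the unsorted subinterval containing the queried rank, with the pivot always chosen as the last item of the current subinterval and with all previously placed pivots remembered (so work already done by earlier queries is reused). The harmonic numbers satisfy $H_0=0$. *)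

(* Defs.v *)
From HB Require Import structures.
From mathcomp Require Import all_boot all_order all_algebra.
Set Implicit Arguments. Unset Strict Implicit. Unset Printing Implicit Defensive.
Import Order.TTheory GRing.Theory Num.Theory.
Local Open Scope ring_scope.

Definition harmonic (R : realFieldType) (q : nat) : R :=
  \sum_(1 <= i < q.+1) (i%:R)^-1.

Definition quickselect_rec (R : realFieldType) (T : nat -> nat -> R) : Prop :=
  (forall n, T n 0%N = 0) /\ (forall q, T 0%N q = 0) /\
  (forall n q, (1 <= n)%N -> (1 <= q)%N ->
     T n q = n%:R + 2 / (n%:R * (q.+1)%:R) *
               \sum_(j < n) \sum_(k < q.+1) T j k).

(* Main.v *)
Require Import Defs.
From HB Require Import structures.
From mathcomp Require Import all_boot all_order all_algebra.
Import Order.TTheory GRing.Theory Num.Theory.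
Local Open Scope ring_scope.

Section H.
Variable R : realFieldType.

Lemma harm0 : harmonic R 0 = 0.
Proof. by rewrite /harmonic big_geq. Qed.

Lemma harmS q : harmonic R q.+1 = harmonic R q + (q.+1)%:R^-1.
Proof. by rewrite /harmonic big_nat_recr. Qed.

Lemma harm_ge1 q : (1 <= q)%N -> 1 <= harmonic R q.
Proof.
case: q => // q _; elim: q => [|q IH]; first by rewrite harmS harm0 add0r invr1.
rewrite harmS; apply: le_trans IH _; rewrite lerDl invr_ge0 ler0n //.
Qed.

Lemma sumH q : \sum_(k < q.+1) harmonic R k + q%:R = (q.+1)%:R * harmonic R q.
Proof.
elim: q => [|q IH]; first by rewrite big_ord_recr big_ord0 /= harm0 !add0r mulr0.
rewrite big_ord_recr /= -[(q.+2)%:R]natr1 mulrDl mul1r addrAC; congr (_ + _).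
by rewrite harmS mulrDr mulfV ?pnatr_eq0 // -IH -natr1 addrA.
Qed.

Lemma sumH2 q : (1 <= q)%N ->
  2 * \sum_(k < q.+1) harmonic R k <= (q.+1)%:R * (2 * harmonic R q - 1).
Proof.
move=> hq; have := sumH q; move/(canRL (addrK _)) => ->.
rewrite !mulrBr mulr1 mulrCA lerD2l lerN2 -natrM ler_nat.
by rewrite mul2n -addnn -addn1 leq_add2l.
Qed.

Lemma sumj n : 2 * \sum_(j < n) (j%:R : R) = n%:R * (n%:R - 1).
Proof.
elim: n => [|n IH]; first by rewrite big_ord0 mulr0 mul0r.
rewrite big_ord_recr /= mulrDr IH -[(n.+1)%:R]natr1 addrK.
by rewrite mulrBr mulr1 !mulrDl !mul1r -addrA addKr.

Qed.
End H.

Theorem mainTheorem1 (R : realFieldType) (T : nat -> nat -> R)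
  (hT : quickselect_rec T) (n q : nat) (hq : (1 <= q)%N) :
  T n q <= 2 * n%:R * harmonic R q.
Proof.
case: hT => hT0 [hT1 hT2].
suff H : forall n k, T n k <= 2 * n%:R * harmonic R k by apply: H.
elim/ltn_ind => {}n IH k.
case: k => [|k]; first by rewrite hT0 harm0 mulr0.
case: n IH => [|n] IH; first by rewrite hT1 mulr0 mul0r.
set a : R := (n.+1)%:R.
set c : R := (k.+2)%:R.
set h := harmonic R k.+1.
have ha : 0 < a by rewrite ltr0n.
have hc : 0 < c by rewrite ltr0n.
rewrite hT2 //.
set X := \sum_(j < n.+1) _.
have hX : X <= \sum_(j < n.+1) (j%:R * (c * (2 * h - 1))).
  apply: ler_sum => j _.
  apply: (@le_trans _ _ (\sum_(i < k.+2) 2 * j%:R * harmonic R i)).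
    by apply: ler_sum => i _; apply: IH.
  rewrite -mulr_sumr [2 * _]mulrC -mulrA; apply: ler_wpM2l; first exact: ler0n.
  exact: sumH2.
rewrite -mulr_suml in hX.
have h2X : 2 * X <= (a * c) * ((a - 1) * (2 * h - 1)).
  apply: le_trans (ler_wpM2l _ hX) _; first by [].
  by rewrite !mulrA sumj -/a -(mulrA a (a - 1) c) (mulrC (a - 1) c) mulrA.
rewrite -/a -/c mulrAC mulrC.
have h1 : 1 <= h by apply: harm_ge1.
apply: (@le_trans _ _ (a + (a - 1) * (2 * h - 1))).
  rewrite lerD2l; apply: le_trans (ler_wpM2l _ h2X) _.
    by rewrite invr_ge0 mulr_ge0 // ltW.
  by rewrite mulKf // mulf_neq0 // gt_eqF.
rewrite mulrBr mulr1 addrCA subKr -mulrA [2 * (a * h)]mulrCA mulrBl mul1r.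
rewrite -addrA gerDl addrC subr_le0 mulr_natl mulr2n.
have h0 := le_trans ler01 h1.
by apply: le_trans h1 _; rewrite lerDl.
Qed.
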